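(* Let $n\ge 3$ and $k\ge 1$. Let $G=C_n$ be the cycle $g_1g_2\cdots g_ng_1$ and let $H=C_{3k+2}$ have vertex set $\{1,2,\dots,3k+2\}$ with $i$ adjacent to $i+1$ for $1\le i\le 3k+1$ and $3k+2$ adjacent to $1$. Define $f\colon V(G)\to V(H)$ by $f(g_i)=1$ if $i\equiv 1\pmod 4$, $f(g_i)=2$ if $i\equiv 2\pmod 4$, and $f(g_i)=3$ otherwise ($i\in\{1,\dots,n\}$). Then \[ \gamma(G\otimes_f H)\le kn+\left\lfloor \frac n2\right\rfloor+\left\lceil \frac n4\right\rceil-\left\lfloor \frac n4\right\rfloor . \]
   Context: $\gamma$ denotes the domination number. For graphs $G,H$ and a function $f\colon V(G)\to V(H)$, the Sierpiński product $G\otimes_f H$ is the graph with vertex set $V(G)\times V(H)$ and edges of two types: (type 1) $(g,h)(g,h')$ for every $g\in V(G)$ and every edge $hh'\in E(H)$; (type 2) $(g,f(g'))(g',f(g))$ for every edge $gg'\in E(G)$. *)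

(* Defs.v *)
From mathcomp Require Import all_boot.
Set Implicit Arguments. Unset Strict Implicit. Unset Printing Implicit Defensive.

(* Cycle on vertices 'I_n: i ~ j iff j = i+1 mod n or i = j+1 mod n.
   Ordinal i (0-based) stands for the paper's vertex i+1. *)
Definition cycle_rel (n : nat) : rel 'I_n :=
  fun i j => (val j == i.+1 %% n) || (val i == j.+1 %% n).

Definition dominating (T : finType) (e : rel T) (D : {set T}) : bool :=
  [forall x, (x \in D) || [exists y in D, e y x]].

Lemma dominating_exists (T : finType) (e : rel T) :
  exists m, [exists D : {set T}, dominating e D && (#|D| == m)].
Proof.
exists #|[set: T]|; apply/existsP; exists [set: T]; rewrite eqxx andbT.
by apply/forallP => x; rewrite in_setT.
Qed.

Definition domination_number (T : finType) (e : rel T) : nat :=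
  ex_minn (dominating_exists e).

Definition sierpinski_rel (TG TH : finType) (eG : rel TG) (eH : rel TH)
  (f : TG -> TH) : rel (TG * TH) :=
  fun a b =>
    ((a.1 == b.1) && eH a.2 b.2)
    || [&& eG a.1 b.1, a.2 == f b.1 & b.2 == f a.1].

(* The function f of the theorem: G = C_n, H = C_(3k+2), with
   ordinal i <-> g_(i+1) and ordinal j <-> vertex j+1 of H. *)
Definition f_paper (n k : nat) (i : 'I_n) : 'I_((3 * k).+2) :=
  let r := (i.+1) %% 4 in
  if r == 1 then inord 0 else if r == 2 then inord 1 else inord 2.
Arguments f_paper : clear implicits.
Arguments cycle_rel : clear implicits.

(* Main.v *)
Require Import Defs.
From mathcomp Require Import all_boot.
From mathcomp Require Import zify.
Set Implicit Arguments. Unset Strict Implicit. Unset Printing Implicit Defensive.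

Definition fn (j : nat) : nat :=
  let r := j.+1 %% 4 in if r == 1 then 0 else if r == 2 then 1 else 2.

Lemma fn_spec j : fn j = if j %% 4 == 0 then 0 else if j %% 4 == 1 then 1 else 2.
Proof.
rewrite /fn -addn1 -modnDml.
have := ltn_pmod j (isT : 0 < 4).
by case: (j %% 4) => [|[|[|[|r]]]].
Qed.

Lemma valf n k (j : 'I_n) : 0 < k -> (f_paper n k j : nat) = fn j.
Proof.
move=> k0; rewrite /f_paper /fn; cbv zeta.
by case: ifP => _; [|case: ifP => _]; apply: inordK; lia.
Qed.

Lemma cyc_nat m (x y : 'I_m) :
  ((y : nat) = (x : nat).+1 \/ (x : nat) = (y : nat).+1 \/
      ((x : nat) = m.-1 /\ (y : nat) = 0) \/ ((y : nat) = m.-1 /\ (x : nat) = 0)) ->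
  cycle_rel m x y.
Proof.
have hx := ltn_ord x; have hy := ltn_ord y.
rewrite /cycle_rel -[\val x]/(nat_of_ord x) -[\val y]/(nat_of_ord y).
move=> -[e|[e|[[e1 e2]|[e1 e2]]]]; apply/orP.
- by left; rewrite e modn_small // -e.
- by right; rewrite e modn_small // -e.
- by left; rewrite e1 e2 prednK ?modnn //; lia.
- by right; rewrite e1 e2 prednK ?modnn //; lia.
Qed.

Definition inEc n (i : nat) : bool :=
  ~~ odd i && (i != n.-1) && ~~ ((i == 0) && (n %% 4 == 2)).
Definition aof n (i : nat) : nat := if (i == 0) && (n %% 4 == 1) then 0 else 1.
Definition inA a (h : nat) : bool := (a + 3 <= h) && (3 %| (h - a)).
Definition inB k (h : nat) : bool :=
  (h == 0) || [&& 2 <= h, h <= 3 * k - 1 & h %% 3 == 2].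

Lemma nbB k h : 0 < k -> h < (3 * k).+2 -> ~~ inB k h ->
  exists h', [/\ h' < (3 * k).+2, inB k h' &
   (h = h'.+1 \/ h' = h.+1 \/ (h' = (3*k).+1 /\ h = 0) \/ (h = (3 * k).+1 /\ h' = 0))].
Proof.
rewrite /inB => k0 hN hB.
case: (eqVneq h 1) => [->|h1]; first by exists 0; split; [lia|done|left].
case: (eqVneq h (3 * k).+1) => [->|h2]; first by exists 0; split; [lia|done|right; right; right; lia].
case: (eqVneq (h %% 3) 0) => h3.
  exists h.-1; split; [lia|lia|left; lia].
exists h.+1; split; [lia|lia|right; left; lia].
Qed.

Lemma nbA k a h : 0 < k -> a <= 1 -> h < (3 * k).+2 -> ~~ inA a h -> h != a -> h != a.+1 ->
  exists h', [/\ h' < (3 * k).+2, inA a h' &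
   (h = h'.+1 \/ h' = h.+1 \/ (h' = (3*k).+1 /\ h = 0) \/ (h = (3 * k).+1 /\ h' = 0))].
Proof.
rewrite /inA => k0 a1 hN hA ha ha1.
case: (ltnP h a) => hlt.
  exists (3 * k).+1; split; [lia|lia|right; right; left; lia].
case: (eqVneq ((h - a) %% 3) 1) => h3.
  exists h.-1; split; [lia|lia|left; lia].
exists h.+1; split; [lia|lia|right; left; lia].
Qed.

Lemma fnP j : (fn j = 0 /\ j %% 4 = 0) \/ (fn j = 1 /\ j %% 4 = 1) \/
  (fn j = 2 /\ (j %% 4 = 2 \/ j %% 4 = 3)).
Proof. rewrite fn_spec; case: ifP => /eqP h; [|case: ifP => /eqP h']; lia. Qed.

Lemma ext_pair n i h : 3 <= n -> i < n -> inEc n i ->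
  (h == aof n i) || (h == (aof n i).+1) ->
  h = fn (if i == 0 then n.-1 else i.-1) \/ h = fn i.+1.
Proof.
rewrite /inEc /aof => n3 ni.
have o : odd i = (i %% 2 == 1) by rewrite modn2; case: odd.
rewrite o.
case: (eqVneq i 0) => [->|i0] /=.
  have := fnP n.-1; have := fnP 1; case: ifP; lia.
have := fnP i.-1; have := fnP i.+1; lia.
Qed.

Lemma sum_odd m : \sum_(i < m) odd i = m./2.
Proof.
elim: m => [|m IH]; first by rewrite big_ord0.
rewrite big_ord_recr /= IH -!divn2 -modn2; lia.
Qed.

Lemma sum_eq1 m c (b : bool) : \sum_(i < m) (((i : nat) == c) && b) = (c < m) && b.
Proof.
elim: m => [|m IH]; first by rewrite big_ord0.
rewrite big_ord_recr /= IH; lia.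
Qed.

Lemma oddE i : odd i = (i %% 2 == 1).
Proof. by rewrite modn2; case: odd. Qed.

Theorem mainTheorem10 (n k : nat) :
  3 <= n -> 1 <= k ->
  domination_number
    (sierpinski_rel (cycle_rel n) (cycle_rel (3 * k).+2) (f_paper n k))
  <= k * n + n %/ 2 + (n + 3) %/ 4 - n %/ 4.
Proof.
move=> n3 k1.
pose D : {set 'I_n * 'I_(3 * k).+2} :=
  [set p : 'I_n * 'I_(3 * k).+2 | if inEc n p.1 then inA (aof n p.1) p.2 else inB k p.2].
have Hdom : dominating
    (sierpinski_rel (cycle_rel n) (cycle_rel (3 * k).+2) (f_paper n k)) D.
  apply/forallP => -[i h].
  case Hd: ((i, h) \in D); first by [].
  rewrite /=; apply/existsP.
  rewrite in_set /= in Hd.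
  have hN := ltn_ord h; have hn := ltn_ord i.
  case Hi: (inEc n i); rewrite Hi in Hd.
  - case: (boolP (((h : nat) == aof n i) || ((h : nat) == (aof n i).+1))) => Hh.
    + have [e|e] := ext_pair n3 hn Hi Hh.
      * have lt : (if (i : nat) == 0 then n.-1 else (i : nat).-1) < n.
          by case: ifP; lia.
        pose p : 'I_n := Ordinal lt.
        have vp : (p : nat) = (if (i : nat) == 0 then n.-1 else (i : nat).-1) by [].
        exists (p, f_paper n k i); apply/andP; split.
          rewrite in_set /= ?vp.
          have -> : inEc n (if (i : nat) == 0 then n.-1 else (i : nat).-1) = false.
            move: Hi; rewrite /inEc !oddE; case: ifP; lia.
          rewrite /inB valf //; have := fnP i; move: Hi; rewrite /inEc oddE; lia.
        rewrite /sierpinski_rel /=; apply/orP; right; apply/and3P; split.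
        - apply: cyc_nat; rewrite ?vp; move: Hi; rewrite /inEc; case: ifP; lia.
        - by [].
        - by apply/eqP; apply: val_inj; rewrite /= valf // ?vp.
      * have lt : (i : nat).+1 < n by move: Hi; rewrite /inEc; lia.
        pose p : 'I_n := Ordinal lt.
        have vp : (p : nat) = (i : nat).+1 by [].
        exists (p, f_paper n k i); apply/andP; split.
          rewrite in_set /= ?vp.
          have -> : inEc n (i : nat).+1 = false.
            move: Hi; rewrite /inEc !oddE; lia.
          rewrite /inB valf //; have := fnP i; move: Hi; rewrite /inEc oddE; lia.
        rewrite /sierpinski_rel /=; apply/orP; right; apply/and3P; split.
        - apply: cyc_nat; rewrite ?vp; lia.
        - by [].
        - by apply/eqP; apply: val_inj; rewrite /= valf // ?vp.
    + have a1 : aof n i <= 1 by rewrite /aof; case: ifP.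
      move: Hh; rewrite negb_or => /andP[h1 h2].
      have [h' [h'N h'A hadj]] := nbA k1 a1 hN (negbT Hd) h1 h2.
      exists (i, inord h'); apply/andP; split.
        by rewrite in_set /= Hi inordK.
      rewrite /sierpinski_rel /= eqxx /=; apply/orP; left.
      apply: cyc_nat; rewrite inordK //; lia.
  - have [h' [h'N h'B hadj]] := nbB k1 hN (negbT Hd).
    exists (i, inord h'); apply/andP; split.
      by rewrite in_set /= Hi inordK.
    rewrite /sierpinski_rel /= eqxx /=; apply/orP; left.
    apply: cyc_nat; rewrite inordK //; lia.
apply: (@leq_trans #|D|).
  rewrite /domination_number; case: ex_minnP => m _ Hmin; apply: Hmin.
  by apply/existsP; exists D; rewrite Hdom eqxx.
have HcD : #|D| = \sum_(i : 'I_n) #|[set h : 'I_(3 * k).+2 | (i, h) \in D]|.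
  transitivity (\sum_(p : 'I_n * 'I_(3 * k).+2) ((p \in D) : nat)).
    by rewrite -sum1_card big_mkcond /=; apply: eq_bigr => p _; case: (p \in D).
  have -> : \sum_(p : 'I_n * 'I_(3 * k).+2) ((p \in D) : nat) =
      \sum_(i : 'I_n) \sum_(h : 'I_(3 * k).+2) (((i, h) \in D) : nat).
    by rewrite pair_big; apply: eq_bigr => -[i h].
  apply: eq_bigr => i _; rewrite -sum1_card big_mkcond /=.
  rewrite [RHS]big_mkcond /=; apply: eq_bigr => h _; rewrite [in RHS]in_set; by case: (_ \in D).
have Hslice : forall i : 'I_n,
    #|[set h : 'I_(3 * k).+2 | (i, h) \in D]| <= if inEc n i then k else k.+1.
  move=> i; case Hi: (inEc n i).
  - apply: (@leq_trans #|[set (inord (3 * t + 3 + aof n i) : 'I_(3 * k).+2) | t : 'I_k]|).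
      apply: subset_leq_card; apply/subsetP => h; rewrite !in_set /= Hi => hA.
      have hN := ltn_ord h.
      have a1 : aof n i <= 1 by rewrite /aof; case: ifP.
      have ht : (h - aof n i) %/ 3 - 1 < k by move: hA; rewrite /inA; lia.
      apply/imsetP; exists (Ordinal ht) => //; apply: val_inj.
      rewrite /= inordK; move: hA; rewrite /inA; lia.
    by rewrite (leq_trans (leq_imset_card _ _)) // card_ord.
  - apply: (@leq_trans #|ord0 |: [set (inord (3 * t + 2) : 'I_(3 * k).+2) | t : 'I_k]|).
      apply: subset_leq_card; apply/subsetP => h; rewrite !in_set /= Hi => hB.
      have hN := ltn_ord h.
      case: (eqVneq (h : nat) 0) => h0.
        by rewrite in_set1; apply/orP; left; apply/eqP; apply: val_inj.
      apply/orP; right.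
      have ht : (h : nat) %/ 3 < k by move: hB; rewrite /inB; lia.
      apply/imsetP; exists (Ordinal ht) => //; apply: ord_inj.
      rewrite /= inordK; move: hB hN; rewrite /inB; lia.
    rewrite cardsU1 (leq_trans (leq_add (leq_b1 _) (leq_imset_card _ _))) //.
    by rewrite card_ord add1n.
rewrite HcD; apply: (@leq_trans (\sum_(i < n) (if inEc n i then k else k.+1))).
  by apply: leq_sum => i _; exact: Hslice.
have -> : \sum_(i < n) (if inEc n i then k else k.+1) =
    \sum_(i < n) k + \sum_(i < n) (~~ inEc n i : nat).
  by rewrite -big_split; apply: eq_bigr => i _; case: inEc => /=; lia.
rewrite sum_nat_const card_ord.
apply: (@leq_trans (n * k + \sum_(i < n) (odd i + (((i : nat) == n.-1) && ~~ odd n.-1)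
    + (((i : nat) == 0) && (n %% 4 == 2))))).
  by rewrite leq_add2l; apply: leq_sum => i _; rewrite /inEc !oddE; lia.
rewrite !big_split /= sum_odd !sum_eq1 -divn2 !oddE; lia.
Qed.
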